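(* For any tree $T$, the matrix $\mathrm{Min4PC}_T=(m_{a,b})_{a,b\in\mathcal{V}_2}$ is hypermetric, is of negative type, and has exactly one positive eigenvalue.
   Context: For a tree $T$ with vertex set $V$ on $n$ vertices, $d_{i,j}$ is the distance between $i,j$ and $\mathcal{V}_2$ the set of 2-element subsets of $V$. $\mathrm{Min4PC}_T$ is the $\binom n2\times\binom n2$ matrix indexed by $\mathcal{V}_2$ whose entry in row $\{i,j\}$, column $\{k,l\}$ is $\min\{d_{i,l}+d_{j,k},\ d_{i,k}+d_{j,l},\ d_{i,j}+d_{k,l}\}$. A symmetric matrix $D=(d_{a,b})$ indexed by a finite set $X$ (with zero diagonal) is hypermetric if $\sum_{\{a,b\}\subseteq X, a\ne b} x_ax_bd_{a,b}\le 0$ for all integer vectors $x\in\mathbb{Z}^X$ with $\sum_a x_a=1$, and of negative type if the same inequality holds for all $x\in\mathbb{Z}^X$ with $\sum_a x_a=0$. *)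

(* Defs.v *)
From mathcomp Require Import all_boot all_order all_algebra.
Set Implicit Arguments. Unset Strict Implicit. Unset Printing Implicit Defensive.
Import Order.TTheory GRing.Theory Num.Theory.

Definition is_tree (V : finType) (e : rel V) : Prop :=
  [/\ symmetric e, irreflexive e, (forall x y : V, connect e x y) &
      (forall p : seq V, 3 <= size p -> uniq p -> ~~ cycle e p)].

Definition walkb (V : finType) (e : rel V) (k : nat) (x y : V) : bool :=
  [exists p : k.-tuple V, path e x p && (last x p == y)].

Definition dist (V : finType) (e : rel V) (x y : V) : nat :=
  find (fun k => walkb e k x y) (iota 0 #|V|).

Definition V2 (V : finType) : {set {set V}} := [set S : {set V} | #|S| == 2].

Definition min4pc_entry (V : finType) (e : rel V) (S T : {set V}) : nat :=
  match enum S, enum T with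
  | [:: i; j], [:: k; l] =>
      minn (minn (dist e i l + dist e j k) (dist e i k + dist e j l))
           (dist e i j + dist e k l)
  | _, _ => 0
  end.

Definition Min4PC (R : nzRingType) (V : finType) (e : rel V)
  : 'M[R]_#|V2 V| :=
  \matrix_(a, b) ((min4pc_entry e (enum_val a) (enum_val b))%:R)%R.

Local Open Scope ring_scope.

Definition hypermetric (R : numDomainType) (N : nat) (D : 'M[R]_N) : Prop :=
  forall x : 'I_N -> int, \sum_(a < N) x a = 1 ->
    \sum_(a < N) \sum_(b < N | (a < b)%N) ((x a * x b)%:~R * D a b) <= 0.

Definition negative_type (R : numDomainType) (N : nat) (D : 'M[R]_N) : Prop :=
  forall x : 'I_N -> int, \sum_(a < N) x a = 0 ->
    \sum_(a < N) \sum_(b < N | (a < b)%N) ((x a * x b)%:~R * D a b) <= 0.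

(* exactly one positive eigenvalue, counted with multiplicity: the
   characteristic polynomial splits as prod (X - l) over the list s of
   eigenvalues (with multiplicity) and exactly one of them is positive *)
Definition one_positive_eigenvalue (R : rcfType) (N : nat) (A : 'M[R]_N) : Prop :=
  exists s : seq R, char_poly A = \prod_(l <- s) ('X - l%:P)
                    /\ count (fun l => 0 < l) s = 1%N.

(* Main.v *)
Require Import Defs.
From mathcomp Require Import all_boot all_order all_algebra.
From mathcomp Require Import zify ring sesquilinear spectral.
From mathcomp Require complex.
Set Implicit Arguments. Unset Strict Implicit. Unset Printing Implicit Defensive.
Import Order.TTheory GRing.Theory Num.Theory.

Section Tree.
Variables (V : finType) (e : rel V).
Hypothesis eS : symmetric e.
Hypothesis eirr : irreflexive e.
Hypothesis conn : forall x y : V, connect e x y.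
Hypothesis nocyc : forall p : seq V, 3 <= size p -> uniq p -> ~~ cycle e p.

Local Notation d := (dist e).

Lemma walkbP k x y :
  reflect (exists p : seq V, [/\ size p = k, path e x p & last x p = y])
          (walkb e k x y).
Proof.
apply: (iffP existsP).
  by move=> [p /andP[pp /eqP lp]]; exists (tval p); rewrite size_tuple.
move=> [p [sp pp lp]].
have sp' : size p == k by apply/eqP.
by exists (Tuple sp'); rewrite /= pp lp eqxx.
Qed.

Lemma walk_small x y : exists k, k < #|V| /\ walkb e k x y.
Proof.
have /connectP [p pp lp] := conn x y.
case: (shortenP pp) lp => p' pp' up' _ lp'.
exists (size p'); split; last by apply/walkbP; exists p'.
have := card_uniqP up'; rewrite /= => H.
have := max_card (mem (x :: p')); rewrite H /=; lia.
Qed.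

Lemma has_walk x y : has (fun k => walkb e k x y) (iota 0 #|V|).
Proof.
have [k [lk wk]] := walk_small x y.
by apply/hasP; exists k => //; rewrite mem_iota.
Qed.

Lemma dist_lt x y : d x y < #|V|.
Proof. by have := has_walk x y; rewrite has_find size_iota. Qed.

Lemma dist_walk x y : walkb e (d x y) x y.
Proof.
have := nth_find 0 (has_walk x y).
by rewrite nth_iota ?add0n // dist_lt.
Qed.

Lemma dist_min k x y : walkb e k x y -> d x y <= k.
Proof.
move=> wk; case: (ltnP k #|V|) => hk; last by have := dist_lt x y; lia.
rewrite leqNgt; apply/negP => /(before_find 0).
by rewrite nth_iota // add0n wk.
Qed.

Lemma dist_le x p : path e x p -> d x (last x p) <= size p.
Proof. by move=> pp; apply: dist_min; apply/walkbP; exists p. Qed.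

Lemma sw_exists x y : exists p, [/\ size p = d x y, path e x p & last x p = y].
Proof. exact/walkbP/dist_walk. Qed.

Lemma dist0 x : d x x = 0.
Proof. by apply/eqP; rewrite -leqn0 (@dist_le x [::]). Qed.

Lemma dist_eq0 x y : d x y = 0 -> x = y.
Proof.
by move=> h; have [[|z p] [sp pp lp]] := sw_exists x y; rewrite ?h //= in sp lp *.
Qed.

Lemma dist_sym x y : d x y = d y x.
Proof.
suff H : forall x y, d y x <= d x y.
  by apply/eqP; rewrite eqn_leq !H.
move=> {}x {}y; have [p [sp pp lp]] := sw_exists x y.
have : path e (last x p) (rev (belast x p)).
  by rewrite rev_path; rewrite (eq_path (e' := e)) // => a b /=; rewrite eS.
rewrite lp => /dist_le; rewrite size_rev size_belast sp.
suff -> : last y (rev (belast x p)) = x by [].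
by case: p lp {sp pp} => [|z q] /= lp; rewrite ?lp // rev_cons last_rcons.
Qed.

Lemma dist_tri x z y : d x y <= d x z + d z y.
Proof.
have [p [sp pp lp]] := sw_exists x z.
have [q [sq pq lq]] := sw_exists z y.
have := @dist_le x (p ++ q); rewrite cat_path pp lp pq last_cat lp lq size_cat sp sq.
by apply.
Qed.

Lemma dist_adj x y : e x y -> d x y <= 1.
Proof. by move=> exy; have := @dist_le x [:: y]; rewrite /= exy; apply. Qed.

Lemma dist_step n x y : d x y = n.+1 -> exists x', e x x' /\ d x' y = n.
Proof.
move=> h; have [[|z p] [sp pp lp]] := sw_exists x y; rewrite h // in sp.
move: pp => /= /andP[exz pz]; exists z; split => //.
have h1 := @dist_le z p pz; rewrite /= in lp; rewrite lp in h1.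
have h2 := dist_tri x z y; have h3 := dist_adj exz; case: sp => sp; lia.
Qed.

Lemma sw_mem x p w : path e x p -> size p = d x (last x p) -> w \in x :: p ->
  d x w + d w (last x p) = d x (last x p).
Proof.
move=> pp sp; rewrite in_cons => /predU1P [->|wp]; first by rewrite dist0.
move: pp sp; case/splitPr: wp => p1 p2.
rewrite cat_path /= => /and3P [p1p ew p2p].
rewrite last_cat /= size_cat /= => sp.
have h1 : d x w <= size p1 + 1.
  have := @dist_le x (rcons p1 w); rewrite rcons_path p1p ew last_rcons size_rcons addn1.
  by apply.
have h2 := @dist_le w p2 p2p.
have h3 := dist_tri x w (last w p2). set D := d x (last w p2) in sp h3 *. set D2 := d w (last w p2) in h2 h3 *. set D1 := d x w in h1 h3 *. set a := size p1 in sp h1 *. set b := size p2 in sp h2 *. lia.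
Qed.

Lemma sw_uniq x p : path e x p -> size p = d x (last x p) -> uniq (x :: p).
Proof.
elim: p x => [//|z p IH] x pp sp.
have xnp : x \notin z :: p.
  apply/negP => xin; move: pp sp; case/splitPr: xin => p1 p2.
  rewrite cat_path last_cat /= => /and3P [_ _ p2p].
  have := @dist_le x p2 p2p; rewrite size_cat /= => h1 h2.
  set D := d x _ in h1 h2; set a := size p1 in h2; set b := size p2 in h1 h2; lia.
move: pp sp => /= /andP [exz pz] sp.
rewrite xnp /=; apply: IH => //.
have h1 := @dist_le z p pz; have h2 := dist_tri x z (last z p).
have h3 := dist_adj exz; move: sp.
set D := d x _ ; set D2 := d z _ in h1 h2 *; set a := size p in h1 *; lia.
Qed.

Lemma sw_mem2 x p y w : path e x p -> last x p = y -> size p = d x y -> w \in x :: p ->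
  d x w + d w y = d x y.
Proof. by move=> pp <- sp; apply: sw_mem. Qed.

Lemma sep u v a b : e u v -> e a b -> d a u < d a v -> d b v <= d b u ->
  a = u /\ b = v.
Proof.
move=> euv eab hau hbv.
have [pa [spa ppa lpa]] := sw_exists a u.
have [pb [spb ppb lpb]] := sw_exists b v.
have ua : uniq (a :: pa) by apply: sw_uniq; rewrite // lpa.
have ub : uniq (b :: pb) by apply: sw_uniq; rewrite // lpb.
have Ha : forall w, w \in a :: pa -> d w u < d w v.
  move=> w /(sw_mem2 ppa lpa spa) h.
  have := dist_tri a w v; lia.
have Hb : forall w, w \in b :: pb -> d w v <= d w u.
  move=> w /(sw_mem2 ppb lpb spb) h.
  have := dist_tri b w u; lia.
case: (ltnP 0 (size pa + size pb)) => Hs; last first.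
  have [ea eb] : pa = [::] /\ pb = [::].
    by move: Hs; case: (pa) => [|? ?]; case: (pb) => [|? ?].
  by move: lpa lpb; rewrite ea eb.
exfalso.
set c := rev (a :: pa) ++ b :: pb.
have sc : 3 <= size c by rewrite /c size_cat size_rev /=; lia.
have uc : uniq c.
  rewrite /c cat_uniq rev_uniq ua ub andbT; apply/hasPn => w wB.
  rewrite mem_rev; apply/negP => wA; have := Ha _ wA; have := Hb _ wB; lia.
have := nocyc sc uc; apply/negP.
rewrite /c (cycle_path a) last_cat /= lpb cat_path /= (lastI a pa) rev_rcons /= lpa.
have hp : path e u (rev (belast a pa)).
  by rewrite -lpa rev_path (eq_path (e' := e)) ?ppa // => x y /=; rewrite eS.
have hl : last u (rev (belast a pa)) = a.
  by case: (pa) lpa => [|z q] /= lpa; rewrite ?lpa // rev_cons last_rcons.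
by rewrite hp hl (eS v u) euv eab ppb.
Qed.

Definition Aset (x : V) (z : V * V) : bool := e z.1 z.2 && (d x z.1 < d x z.2).

Lemma dist_pos x y : e x y -> 0 < d x y.
Proof.
move=> exy; rewrite lt0n; apply/eqP => /dist_eq0 h.
by move: exy; rewrite h eirr.
Qed.

Lemma adj_sep x x' z : e x x' ->
  (Aset x z (+) Aset x' z) = (z == (x, x')) || (z == (x', x)).
Proof.
move=> exx; case: z => u v; rewrite /Aset /= !xpair_eqE.
have p1 := dist_pos exx; have p2 : 0 < d x' x by rewrite dist_sym.
case euv: (e u v) => /=; last first.
  apply/esym/negbTE; apply/negP => /orP [/andP [/eqP eu /eqP ev]|/andP [/eqP eu /eqP ev]];
  by move: euv; rewrite eu ev ?exx // eS exx.
case hx: (d x u < d x v); case hx': (d x' u < d x' v) => /=.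
- apply/esym/negbTE; apply/negP => /orP [/andP [/eqP eu /eqP ev]|/andP [/eqP eu /eqP ev]];
  subst u v; move: hx hx'; rewrite !dist0 //.
- have h : d x' v <= d x' u by rewrite leqNgt hx'.
  by have [-> ->] := sep euv exx hx h; rewrite !eqxx.
- have h : d x v <= d x u by rewrite leqNgt hx.
  have exx' : e x' x by rewrite eS.
  by have [-> ->] := @sep u v x' x euv exx' hx' h; rewrite !eqxx orbT.
- apply/esym/negbTE; apply/negP => /orP [/andP [/eqP eu /eqP ev]|/andP [/eqP eu /eqP ev]];
  subst u v; move: hx hx'; rewrite !dist0 ?p1 ?p2 //.
Qed.

Lemma cross u v x y : e u v -> d x u < d x v -> d y v <= d y u ->
  d x y = d x u + 1 + d v y.
Proof.
move=> euv; move Hn: (d x y) => n; elim: n x Hn => [|n IH] x Hn hx hy.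
  by move/dist_eq0: Hn => exy; subst x; lia.
have [x' [exx dx']] := dist_step Hn.
case hx': (d x' u < d x' v).
  have := IH x' dx' hx' hy => h1.
  have h2 := dist_tri x u y; have h3 := dist_adj euv; have h4 := dist_tri u v y.
  have h5 := dist_tri x x' u; have h6 := dist_adj exx.
  rewrite (dist_sym v y) in h4; rewrite (dist_sym v y).
  rewrite (dist_sym v y) in h1; lia.
have h : d x' v <= d x' u by rewrite leqNgt hx'.
have [ex ex'] := sep euv exx hx h; subst x x'.
by rewrite dist0 dx'.
Qed.

Lemma xorb_nat (p q : bool) : ((p (+) q : nat) + 2 * (p && q) = p + q)%N.
Proof. by case: p; case: q. Qed.

Lemma sum_xor (I : finType) (P Q : I -> bool) :
  (\sum_(z : I) (P z (+) Q z : nat) + 2 * \sum_(z : I) (P z && Q z : nat) =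
   \sum_(z : I) (P z : nat) + \sum_(z : I) (Q z : nat))%N.
Proof. by rewrite big_distrr /= -!big_split /=; apply: eq_bigr => z _; rewrite xorb_nat. Qed.

Lemma sum_eq1 (I : finType) (a : I) : (\sum_(z : I) ((z == a) : nat) = 1)%N.
Proof.
rewrite (bigD1 a) //= eqxx big1 // => z /negbTE -> //.
Qed.

Lemma dist_sum x y :
  (2 * d x y = \sum_(z : V * V) (Aset x z (+) Aset y z : nat))%N.
Proof.
move Hn: (d x y) => n; elim: n x Hn => [|n IH] x Hn.
  move/dist_eq0: Hn => ->; rewrite muln0 big1 // => z _; by rewrite addbb.
have [x' [exx dx']] := dist_step Hn.
have := sum_xor (fun z => Aset x z (+) Aset x' z) (fun z => Aset x' z (+) Aset y z).
have -> : \sum_(z : V * V) ((Aset x z (+) Aset x' z) (+) (Aset x' z (+) Aset y z) : nat)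
   = \sum_(z : V * V) (Aset x z (+) Aset y z : nat).
  by apply: eq_bigr => z _; rewrite addbA -(addbA (Aset x z)) addbb addbF.
rewrite -(IH x' dx') [X in 2 * X]big1; first last.
  move=> z _; rewrite adj_sep //; case/orP: (orbN ((z == (x, x')) || (z == (x', x)))) => [|/negbTE -> //].
  case/orP => /eqP -> /=; rewrite /Aset /=.
    rewrite exx /= !dist0 (dist_sym y x) (dist_sym y x') Hn dx' eqxx /=.
    by rewrite ltnNge leqnSn.
  have ex' : e x' x by rewrite eS.
  rewrite ex' /= !dist0 (dist_sym y x) (dist_sym y x') Hn dx' eqxx orbT /=.
  by rewrite ltnSn (dist_pos ex').
have -> : \sum_(z : V * V) (Aset x z (+) Aset x' z : nat) = 2.
  have xx : (x, x') != (x', x).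
    by apply/negP => /eqP [h]; move: exx; rewrite h eirr.
  rewrite (eq_bigr (fun z => ((z == (x, x')) : nat) + ((z == (x', x)) : nat))%N).
    by rewrite big_split /= !sum_eq1.
  move=> z _; rewrite adj_sep //.
  by case: eqP => [->|]; rewrite ?(negbTE xx) //=; case: eqP.
lia.
Qed.

Lemma L4 u v x y z w : e u v -> d x u < d x v -> d y v <= d y u ->
  d z u < d z v -> d w v <= d w u -> d x z + d y w + 2 <= d x y + d z w.
Proof.
move=> euv hx hy hz hw.
rewrite (cross euv hx hy) (cross euv hz hw).
have h1 := dist_tri x u z; have h2 := dist_tri y v w.
rewrite (dist_sym u z) in h1; rewrite (dist_sym y v) in h2; lia.
Qed.

Definition X p q z := Aset p z (+) Aset q z.

Lemma Lpair p q r s : 0 < \sum_(z : V * V) (X p q z && X r s z : nat) ->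
  d p r + d q s + 2 <= d p q + d r s \/ d p s + d q r + 2 <= d p q + d r s.
Proof.
move=> hpos.
have [[u v] /andP [hpq hrs]] : exists z, X p q z && X r s z.
  apply/existsP; apply/negP => /existsP hn; move: hpos; rewrite big1 //.
  by move=> z _; case: (boolP (X p q z && X r s z)) => // hz; case: hn; exists z.
move: hpq hrs; rewrite /X /Aset /=.
case euv: (e u v) => //=.
case: (ltnP (d p u) (d p v)) => hp; case: (ltnP (d q u) (d q v)) => hq //= _;
case: (ltnP (d r u) (d r v)) => hr; case: (ltnP (d s u) (d s v)) => hs //= _.
- by left; apply: (L4 euv).
- by right; have := L4 euv hp hq hs hr; rewrite (dist_sym s r).
- by right; have := L4 euv hq hp hr hs; rewrite (dist_sym q p) (dist_sym q r) (dist_sym p s); lia.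
- by left; have := L4 euv hq hp hs hr; rewrite (dist_sym q p) (dist_sym s r) (dist_sym q s) (dist_sym p r); lia.
Qed.

Lemma four i j k l :
  (2 * minn (minn (d i l + d j k) (d i k + d j l)) (d i j + d k l) =
   \sum_(z : V * V) (X i j z (+) X k l z : nat))%N.
Proof.
have E1 := sum_xor (X i l) (X j k).
have E2 := sum_xor (X i k) (X j l).
have E3 := sum_xor (X i j) (X k l).
have F : forall p q r s, X p q =1 (fun z => Aset p z (+) Aset q z).
  by [].
have T1 : \sum_(z : V * V) (X i l z (+) X j k z : nat) = \sum_(z : V * V) (X i j z (+) X k l z : nat).
  apply: eq_bigr => z _; rewrite /X.
  by case: (Aset i z); case: (Aset j z); case: (Aset k z); case: (Aset l z).
have T2 : \sum_(z : V * V) (X i k z (+) X j l z : nat) = \sum_(z : V * V) (X i j z (+) X k l z : nat).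
  apply: eq_bigr => z _; rewrite /X.
  by case: (Aset i z); case: (Aset j z); case: (Aset k z); case: (Aset l z).
rewrite T1 in E1; rewrite T2 in E2.
have D : forall p q, \sum_(z : V * V) (X p q z : nat) = 2 * d p q by move=> p q; rewrite dist_sum.
rewrite !D in E1 E2 E3.
have O1 := @Lpair i l j k; have O2 := @Lpair i k j l; have O3 := @Lpair i j k l.
rewrite (dist_sym l j) (dist_sym l k) in O1.
rewrite (dist_sym k j) in O2.
move: E1 E2 E3 O1 O2 O3.
set S := \sum_(z : V * V) (X i j z (+) X k l z : nat).
set o1 := \sum_(z : V * V) (X i l z && X j k z : nat).
set o2 := \sum_(z : V * V) (X i k z && X j l z : nat).
set o3 := \sum_(z : V * V) (X i j z && X k l z : nat).
lia.
Qed.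

Definition cS (S : {set V}) (z : V * V) : bool :=
  match enum S with [:: i; j] => X i j z | _ => false end.

Lemma enum2 (S : {set V}) : #|S| = 2 -> exists i j, enum S = [:: i; j].
Proof.
rewrite cardE; case: (enum S) => [|i [|j [|k s]]] //= _; by exists i, j.
Qed.

Lemma entry_sum (S T : {set V}) : #|S| = 2 -> #|T| = 2 ->
  (2 * min4pc_entry e S T = \sum_(z : V * V) (cS S z (+) cS T z : nat))%N.
Proof.
move=> /enum2 [i [j hS]] /enum2 [k [l hT]].
by rewrite /min4pc_entry /cS hS hT four.
Qed.

Lemma cS_pair (i j : V) : i != j -> cS [set i; j] =1 X i j.
Proof.
move=> ij z; have c2 : #|[set i; j]| = 2 by rewrite cards2 ij.
have [a [b hab]] := enum2 c2; rewrite /cS hab.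
have ha : a \in [set i; j] by rewrite -mem_enum hab mem_head.
have hb : b \in [set i; j] by rewrite -mem_enum hab !inE eqxx orbT.
have ub : a != b by have := enum_uniq (mem [set i; j]); rewrite hab /= inE andbT.
move: ha hb ub; rewrite !inE => /orP [] /eqP -> /orP [] /eqP -> //; rewrite ?eqxx //.
by rewrite /X addbC.
Qed.

End Tree.

Local Open Scope ring_scope.

Lemma quad_id (K : comRingType) N (w v c : 'I_N -> K) :
  \sum_a \sum_b w a * v b * (c a + c b - 2%:R * c a * c b) =
  (\sum_a w a * c a) * (\sum_b v b) + (\sum_a w a) * (\sum_b v b * c b)
   - 2%:R * (\sum_a w a * c a) * (\sum_b v b * c b).
Proof.
have H : forall a, \sum_b w a * v b * (c a + c b - 2%:R * c a * c b) =
   (w a * c a) * (\sum_b v b) + w a * (\sum_b v b * c b)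
   - 2%:R * (w a * c a) * (\sum_b v b * c b).
  move=> a; rewrite -mulrA !mulr_sumr -big_split -sumrB /=.
  by apply: eq_bigr => b _; ring.
rewrite (eq_bigr _ (fun a _ => H a)) sumrB big_split /=.
rewrite !mulr_suml; congr (_ - _); by rewrite -mulr_suml -mulr_sumr.
Qed.

Lemma xor_ring (K : comRingType) (p q : bool) :
  ((p (+) q : nat)%:R : K) = (p : nat)%:R + (q : nat)%:R - 2%:R * (p : nat)%:R * (q : nat)%:R.
Proof. by case: p; case: q => /=; ring. Qed.

Section Ham.
Variables (N : nat) (E : finType) (m : 'I_N -> 'I_N -> nat) (c : 'I_N -> E -> bool).
Hypothesis Hm : forall a b, (2 * m a b = \sum_(z : E) (c a z (+) c b z : nat))%N.

Definition sv (K : comRingType) (w : 'I_N -> K) (z : E) := \sum_a w a * (c a z : nat)%:R.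

Lemma Q2 (K : comRingType) (w v : 'I_N -> K) :
  2%:R * (\sum_a \sum_b w a * v b * (m a b)%:R) =
  \sum_(z : E) (sv w z * (\sum_b v b) + (\sum_a w a) * sv v z
                - 2%:R * sv w z * sv v z).
Proof.
transitivity (\sum_a \sum_b w a * v b * (2 * m a b)%:R).
  rewrite mulr_sumr; apply: eq_bigr => a _; rewrite mulr_sumr; apply: eq_bigr => b _.
  by rewrite natrM; ring.
under eq_bigr => a _ do under eq_bigr => b _ do rewrite Hm natr_sum mulr_sumr.
under eq_bigr => a _ do rewrite exchange_big /=.
rewrite exchange_big /=; apply: eq_bigr => z _.
rewrite /sv -quad_id; apply: eq_bigr => a _; apply: eq_bigr => b _.
by rewrite xor_ring.
Qed.

Lemma m_sym a b : m a b = m b a.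
Proof.
have h : (2 * m a b = 2 * m b a)%N.
  by rewrite !Hm; apply: eq_bigr => z _; rewrite addbC.
lia.
Qed.

Lemma m_diag a : m a a = 0%N.
Proof.
have := Hm a a; under eq_bigr => z _ do rewrite addbb.
by rewrite big1 //; lia.
Qed.

Lemma half_sum (K : comRingType) (w : 'I_N -> K) :
  \sum_(a < N) \sum_(b < N) w a * w b * (m a b)%:R =
  2%:R * \sum_(a < N) \sum_(b < N | (a < b)%N) w a * w b * (m a b)%:R.
Proof.
set f := fun a b => w a * w b * (m a b)%:R.
have fs : forall a b : 'I_N, f a b = f b a by move=> a b; rewrite /f m_sym; ring.
have fd : forall a : 'I_N, f a a = 0 by move=> a; rewrite /f m_diag mulr0.
have E1 : \sum_(a < N) \sum_(b < N) f a b =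
    \sum_(a < N) \sum_(b < N) (if (a < b)%N then f a b else 0) +
    \sum_(a < N) \sum_(b < N) (if (b < a)%N then f a b else 0).
  rewrite -big_split; apply: eq_bigr => a _; rewrite -big_split; apply: eq_bigr => b _ /=.
  case: (ltngtP a b) => h; rewrite ?addr0 ?add0r //.
  by have -> : b = a by apply: val_inj.
have E2 : \sum_(a < N) \sum_(b < N) (if (b < a)%N then f a b else 0) =
          \sum_(a < N) \sum_(b < N) (if (a < b)%N then f a b else 0).
  rewrite exchange_big; apply: eq_bigr => a _; apply: eq_bigr => b _.
  by rewrite fs.
rewrite E1 E2.
under [in RHS]eq_bigr => a _ do rewrite big_mkcond.
rewrite /=; ring.
Qed.

Lemma intr_sumE (R : pzRingType) (F : 'I_N -> int) :
  ((\sum_(a < N) F a)%:~R : R) = \sum_(a < N) (F a)%:~R.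
Proof. by rewrite (big_morph (fun n : int => (n%:~R : R)) (@intrD R) (mulr0z 1)). Qed.

Lemma hyper_gen (R : realDomainType) (x : 'I_N -> int) :
  \sum_(a < N) x a = 1 ->
  \sum_(a < N) \sum_(b < N | (a < b)%N) ((x a * x b)%:~R * ((m a b)%:R : R)) <= 0.
Proof.
move=> hx.
pose w := fun a => ((x a)%:~R : R).
have E0 : \sum_(a < N) \sum_(b < N | (a < b)%N) ((x a * x b)%:~R * ((m a b)%:R : R)) =
         \sum_(a < N) \sum_(b < N | (a < b)%N) w a * w b * (m a b)%:R.
  by apply: eq_bigr => a _; apply: eq_bigr => b _; rewrite intrM.
have sw : \sum_(a < N) w a = 1 by rewrite /w -intr_sumE hx.
have Hq := Q2 w w; rewrite half_sum sw in Hq.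
rewrite E0; rewrite -(@pmulr_rle0 _ (2%:R * 2%:R)) ?mulr_gt0 ?ltr0Sn // -mulrA Hq.
rewrite sumr_le0 // => z _.
have -> : sv w z = (\sum_(a < N) x a * (c a z : nat)%:Z)%:~R.
  by rewrite intr_sumE; apply: eq_bigr => a _; rewrite intrM.
set n := \sum_(a < N) _.
have -> : (n%:~R * 1 + 1 * n%:~R - 2%:R * n%:~R * n%:~R : R) = (2 * (n * (1 - n)))%:~R.
  by rewrite !(intrM, intrB, intrD) /=; ring.
rewrite lerz0; nia.
Qed.

Lemma negtype_gen (R : realDomainType) (w : 'I_N -> R) :
  \sum_(a < N) w a = 0 ->
  \sum_(a < N) \sum_(b < N) w a * w b * (m a b)%:R <= 0.
Proof.
move=> hw; have Hq := Q2 w w; rewrite hw in Hq.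
rewrite -(@pmulr_rle0 _ 2%:R) ?ltr0Sn // Hq.
rewrite sumr_le0 // => z _.
rewrite mulr0 mul0r !add0r oppr_le0 -mulrA mulr_ge0 ?ler0n //.
by rewrite -expr2 sqr_ge0.
Qed.

Lemma negtype_int (R : realDomainType) (x : 'I_N -> int) :
  \sum_(a < N) x a = 0 ->
  \sum_(a < N) \sum_(b < N | (a < b)%N) ((x a * x b)%:~R * ((m a b)%:R : R)) <= 0.
Proof.
move=> hx.
pose w := fun a => ((x a)%:~R : R).
have E0 : \sum_(a < N) \sum_(b < N | (a < b)%N) ((x a * x b)%:~R * ((m a b)%:R : R)) =
         \sum_(a < N) \sum_(b < N | (a < b)%N) w a * w b * (m a b)%:R.
  by apply: eq_bigr => a _; apply: eq_bigr => b _; rewrite intrM.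
have sw : \sum_(a < N) w a = 0 by rewrite /w -intr_sumE hx.
have := negtype_gen sw; rewrite half_sum E0.
by rewrite (@pmulr_rle0 _ 2%:R) ?ltr0Sn.
Qed.

Lemma negtype_C (C : numClosedFieldType) (w : 'I_N -> C) :
  \sum_(a < N) w a = 0 ->
  \sum_(a < N) \sum_(b < N) w a * (w b)^* * (m a b)%:R <= 0.
Proof.
move=> hw; have Hq := Q2 w (fun b => (w b)^*).
have hc : \sum_(b < N) (w b)^* = 0 by rewrite -rmorph_sum hw rmorph0.
rewrite hw hc in Hq.
rewrite -(@pmulr_rle0 _ 2%:R) ?ltr0Sn // Hq.
rewrite sumr_le0 // => z _.
rewrite mulr0 mul0r !add0r oppr_le0 -mulrA mulr_ge0 ?ler0n //.
have -> : sv (fun b => (w b)^*) z = (sv w z)^*.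
  rewrite /sv rmorph_sum; apply: eq_bigr => a _; by rewrite rmorphM /= conjC_nat.
exact: mul_conjC_ge0.
Qed.

End Ham.

Local Open Scope sesquilinear_scope.

Lemma char_poly_sim (K : comNzRingType) n (Q A P : 'M[K]_n) :
  Q *m P = 1%:M -> char_poly (Q *m A *m P) = char_poly A.
Proof.
rewrite /char_poly /char_poly_mx => QP.
have -> : 'X%:M - map_mx polyC (Q *m A *m P) =
    map_mx polyC Q *m ('X%:M - map_mx polyC A) *m map_mx polyC P.
  rewrite mulmxBr mulmxBl !map_mxM; congr (_ - _).
  by rewrite -mulmxA -scalar_mxC mulmxA -map_mxM QP map_mx1 mul1mx.
rewrite !det_mulmx mulrAC -det_mulmx -map_mxM QP map_mx1 det1 mul1r //.
Qed.

Lemma char_poly_diag (K : comNzRingType) n (d : 'rV[K]_n) :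
  char_poly (diag_mx d) = \prod_(i < n) ('X - (d 0 i)%:P).
Proof.
rewrite char_poly_trig ?diag_mx_is_trig //.
by apply: eq_bigr => i _; rewrite mxE eqxx mulr1n.
Qed.

Section Spec.
Variables (C : numClosedFieldType) (N : nat) (B : 'M[C]_N).
Hypothesis HB : B \is hermsymmx.
Hypothesis Hneg : forall y : 'rV[C]_N, \sum_a y 0 a = 0 -> (y *m B *m y^t*) 0 0 <= 0.
Hypothesis Hpos : 0 < ((const_mx 1 : 'rV[C]_N) *m B *m (const_mx 1 : 'rV[C]_N)^t*) 0 0.

Let P := spectralmx B.
Let D := spectral_diag B.

Lemma B_eq : B = P^t* *m diag_mx D *m P.
Proof.
have /orthomx_spectralP E := hermitian_normalmx HB.
by rewrite -invmx_unitary ?spectral_unitarymx.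
Qed.

Lemma PPt : P *m P^t* = 1%:M.
Proof. exact/unitarymxP/spectral_unitarymx. Qed.

Lemma form_diag (r : 'rV[C]_N) :
  ((r *m P) *m B *m (r *m P)^t*) 0 0 = \sum_i r 0 i * D 0 i * (r 0 i)^*.
Proof.
rewrite B_eq trmx_mul map_mxM !mulmxA -(mulmxA r P) PPt mulmx1.
rewrite -(mulmxA (r *m diag_mx D)) PPt mulmx1.
rewrite mul_mx_diag mxE; apply: eq_bigr => i _.
by rewrite !mxE.
Qed.

Lemma D_pos_ex : exists i, 0 < D 0 i.
Proof.
pose u := (const_mx 1 : 'rV[C]_N).
pose r := u *m P^t*.
have ru : r *m P = u by rewrite /r mulmxKtV ?spectral_unitarymx.
have := Hpos; rewrite -/u -ru form_diag.
case: (boolP [exists i, 0 < D 0 i]) => [/existsP [i hi] _|/existsPn hn]; first by exists i.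
set S := (\sum_i _); suff hle : S <= 0 by rewrite (le_gtF hle).
apply: sumr_le0 => i _.
have hi : D 0 i <= 0.
  have hreal : D 0 i \is Num.real.
    by have /mxOverP := hermitian_spectral_diag_real HB; apply.
  by move: (hn i); rewrite real_leNgt ?real0.
rewrite mulrAC mulrC.
by apply: mulr_le0_ge0 => //; apply: mul_conjC_ge0.
Qed.

Lemma row_sum2 (i j : 'I_N) (a b : C) (F : 'I_N -> C) : i != j ->
  \sum_k (if k == i then a else if k == j then b else 0) * F k = a * F i + b * F j.
Proof.
move=> ij; rewrite (bigD1 i) //= eqxx (bigD1 j) /=; last by rewrite eq_sym.
rewrite eq_sym (negbTE ij) eqxx big1 ?addr0 //.
by move=> k /andP [ki kj]; rewrite (negbTE ki) (negbTE kj) mul0r.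
Qed.

Lemma D_pos_uniq i j : 0 < D 0 i -> 0 < D 0 j -> i = j.
Proof.
move=> hi hj; apply/eqP; apply/negP => /negP ij.
pose sg k := \sum_a P k a.
pose rv (a b : C) := \row_k (if k == i then a else if k == j then b else 0).
have key : forall a b, a * sg i + b * sg j = 0 ->
    0 < a * D 0 i * a^* + b * D 0 j * b^* -> False.
  move=> a b hs hf.
  have hsum : \sum_c (rv a b *m P) 0 c = 0.
    under eq_bigr => c _ do rewrite mxE.
    rewrite exchange_big /=.
    under eq_bigr => k _ do rewrite -mulr_sumr mxE.
    by rewrite row_sum2.
  have := Hneg hsum; rewrite form_diag.
  under eq_bigr => k _ do rewrite mxE.
  have -> : \sum_k (if k == i then a else if k == j then b else 0) * D 0 k *
      (if k == i then a else if k == j then b else 0)^* = a * D 0 i * a^* + b * D 0 j * b^*.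
    rewrite (bigD1 i) //= eqxx (bigD1 j) /=; last by rewrite eq_sym.
    rewrite eq_sym (negbTE ij) eqxx big1 ?addr0 //.
    by move=> k /andP [ki kj]; rewrite (negbTE ki) (negbTE kj) !mul0r.
  by move=> hle; move: hf; rewrite (le_gtF hle).
have ge : forall (x d : C), 0 < d -> 0 <= x * d * x^*.
  by move=> x d hd; rewrite mulrAC; apply: mulr_ge0; [exact: mul_conjC_ge0 | exact: ltW].
case: (eqVneq (sg i) 0) => hs.
  apply: (key 1 0); first by rewrite hs !mul0r mulr0 addr0.
  by rewrite conjC1 mul0r mul0r addr0 mulr1 mul1r.
apply: (key (sg j) (- sg i)); first by rewrite mulNr mulrC subrr.
apply: ltr_wpDl; first exact: ge.
rewrite mulrAC mulr_gt0 //.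
by rewrite mul_conjC_gt0 oppr_eq0.
Qed.

Lemma char_poly_spec : char_poly B = \prod_(i < N) ('X - (D 0 i)%:P).
Proof.
rewrite B_eq char_poly_sim ?char_poly_diag //.
by rewrite -[P^t*]mul1mx mulmxKtV ?spectral_unitarymx.
Qed.

Lemma D_real i : D 0 i \is Num.real.
Proof. by have /mxOverP := hermitian_spectral_diag_real HB; apply. Qed.

End Spec.

Lemma form_sum (C : numClosedFieldType) N (B : 'M[C]_N) (y : 'rV[C]_N) :
  (y *m B *m y^t*) 0 0 = \sum_(a < N) \sum_(b < N) y 0 a * (y 0 b)^* * B a b.
Proof.
rewrite mxE exchange_big /=; apply: eq_bigr => b _; rewrite !mxE mulr_suml.
by apply: eq_bigr => a _; rewrite mulrAC.
Qed.

Import complex.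

Theorem corollary4p3 (R : rcfType) (V : finType) (e : rel V) :
  (3 <= #|V|)%N -> is_tree e ->
  hypermetric (Min4PC R e) /\ negative_type (Min4PC R e) /\
  one_positive_eigenvalue (Min4PC R e).
Proof.
move=> hV [eS eirr conn nocyc].
pose N := #|V2 V|.
pose m (a b : 'I_N) := min4pc_entry e (enum_val a) (enum_val b).
pose c (a : 'I_N) z := cS e (enum_val a) z.
have card2 : forall a : 'I_N, #|enum_val a| = 2.
  by move=> a; have := enum_valP a; rewrite inE => /eqP.
have Hm : forall a b, (2 * m a b = \sum_(z : V * V) (c a z (+) c b z : nat))%N.
  by move=> a b; rewrite /m entry_sum.
have ME : forall (K : nzRingType) a b, (Min4PC K e) a b = (m a b)%:R.
  by move=> K a b; rewrite /Min4PC mxE.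
split.
  move=> x hx; under eq_bigr => a _ do under eq_bigr => b _ do rewrite ME.
  exact: (hyper_gen Hm).
split.
  move=> x hx; under eq_bigr => a _ do under eq_bigr => b _ do rewrite ME.
  exact: (negtype_int Hm).
pose A := Min4PC R e.
pose f := real_complex R.
pose B := A ^ f.
have BE : forall a b, B a b = (m a b)%:R.
  by move=> a b; rewrite /B mxE ME /f rmorph_nat.
have HB : B \is hermsymmx.
  apply/is_hermitianmxP; rewrite expr0 scale1r; apply/matrixP => a b.
  by rewrite BE mxE [_^T _ _]mxE BE conjC_nat (m_sym Hm).
have Hneg : forall y : 'rV[R[i]]_N, \sum_a y 0 a = 0 -> (y *m B *m y^t*) 0 0 <= 0.
  move=> y hy; rewrite form_sum.
  under eq_bigr => a _ do under eq_bigr => b _ do rewrite BE.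
  exact: (negtype_C Hm hy).
have [a0 [b0 hpos]] : exists a0 b0, (0 < m a0 b0)%N.
  have : (3 <= size (enum V))%N by rewrite -cardE.
  have := enum_uniq V.
  case: (enum V) => [|i [|j [|k s]]] //=.
  rewrite !inE !negb_or => /andP [/and3P [ij ik _] /andP [/andP [jk _] _]] _.
  have SV2 : [set i; j] \in V2 V by rewrite inE cards2 ij.
  have TV2 : [set i; k] \in V2 V by rewrite inE cards2 ik.
  exists (enum_rank_in SV2 [set i; j]), (enum_rank_in TV2 [set i; k]).
  have h2 : (2 * m (enum_rank_in SV2 [set i; j]) (enum_rank_in TV2 [set i; k])
             = 2 * dist e j k)%N.
    rewrite /m !enum_rankK_in // entry_sum ?(eqP (SV2 : _ \in _)) //; last first.
    - by move: TV2; rewrite inE => /eqP.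
    - by move: SV2; rewrite inE => /eqP.
    rewrite (dist_sum eS eirr conn nocyc); apply: eq_bigr => z _.
    rewrite (cS_pair e ij) (cS_pair e ik) /X.
    by case: (Aset e i z); case: (Aset e j z); case: (Aset e k z).
  have : dist e j k != 0%N.
    by apply/eqP => /(dist_eq0 conn) /eqP; rewrite (negbTE jk).
  lia.
have Hpos : 0 < ((const_mx 1 : 'rV[R[i]]_N) *m B *m (const_mx 1 : 'rV[R[i]]_N)^t*) 0 0.
  rewrite form_sum.
  under eq_bigr => a _ do under eq_bigr => b _ do rewrite BE !mxE conjC1 !mul1r.
  under eq_bigr => a _ do rewrite -natr_sum.
  rewrite -natr_sum ltr0n.
  apply: (leq_trans hpos); rewrite (bigD1 a0) //= (bigD1 b0) //=.
  by rewrite -addnA leq_addr.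
pose D := spectral_diag B.
have [i0 hi0] := D_pos_ex HB Hpos.
have Duniq := D_pos_uniq HB Hneg.
have DR : forall i, f (Re (D 0 i)) = D 0 i by move=> i; rewrite /f RRe_real ?D_real.
exists [seq Re (D 0 i) | i <- enum 'I_N]; split.
  apply: (map_poly_inj f).
  rewrite map_char_poly -/B char_poly_spec // rmorph_prod big_map big_enum /=.
  apply: eq_bigr => i _; rewrite map_polyXsubC /f.
  by congr (_ - _%:P); apply: esym; apply: DR.
rewrite count_map.
rewrite (eq_count (a2 := pred1 i0)); first by rewrite count_uniq_mem ?enum_uniq ?mem_enum.
move=> i /=.
have h : (0 < Re (D 0 i)) = (0 < D 0 i).
  rewrite -ltcR; congr (_ < _); exact: DR.
by rewrite h; apply/idP/eqP => [hi|->//]; exact: Duniq hi hi0.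
Qed.
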